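(* Let $\tau$ be a countable relational signature and let $\mathcal{F}=\langle R_i:i<\omega\rangle$ be a countable family of relations on $\mathbb{N}$ (each of finite arity). Let $\mathrm{Aut}(\mathcal{F})$ be the group of permutations $g$ of $\mathbb{N}$ with $g(R_i)=R_i$ for all $i$. Then every $\mathrm{Aut}(\mathcal{F})$-invariant Borel subset of $X_\tau$ is definable in $\mathscr{L}_{\omega_1\omega}(\mathcal{F})$.
   Context: For a countable relational signature $\tau$ in which each $R\in\tau$ has finite arity $a(R)$, the logic space is $X_\tau=\prod_{R\in\tau}2^{\mathbb{N}^{a(R)}}$ with the product topology; its elements are $\tau$-structures with universe $\mathbb{N}$. A permutation $g$ of $\mathbb{N}$ acts on tuples coordinatewise, on subsets of $\mathbb{N}^k$ by $g(A)=\{g(a):a\in A\}$, and on $X_\tau$ by $R^{g(M)}=g(R^M)$ for each $R\in\tau$. For a group $G$ of permutations, $A\subseteq X_\tau$ is $G$-invariant if $g(A)=A$ for all $g\in G$. $\mathscr{L}_{\omega_1\omega}(\mathcal{F})$ is the infinitary logic with countable conjunctions and disjunctions and finite strings of ordinary quantifiers, in the signature $\tau$ together with a symbol for each $R_i$ with fixed interpretation $R_i$. A set $A\subseteq X_\tau$ is definable in it if there is a sentence $\varphi$ with $M\in A\iff M\models\varphi$ for all $M\in X_\tau$. *)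

(* Defs.v *)
From Stdlib Require List.
From mathcomp Require Import all_boot.
Set Implicit Arguments. Unset Strict Implicit. Unset Printing Implicit Defensive.

Section Logic.

Variable I : Type.
Variable ar : I -> nat.

Variable b : nat -> nat.
Variable F : forall i : nat, (b i).-tuple nat -> Prop.

(* The logic space X_tau = prod_{R in tau} 2^(N^(ar R)); a point assigns to
   each symbol R a subset of N^(ar R), represented as a predicate. *)
Definition X := forall R : I, (ar R).-tuple nat -> Prop.

(* Product topology (of discrete 2's): U is open iff every point of U has
   a basic neighbourhood (determined by finitely many coordinates) inside U. *)
Definition coord := {R : I & (ar R).-tuple nat}.

Definition is_open (U : X -> Prop) : Prop :=
  forall M, U M -> exists l : list coord,
    forall M', (forall p, List.In p l -> (M' (projT1 p) (projT2 p) <-> M (projT1 p) (projT2 p))) ->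
               U M'.

Inductive Borel : (X -> Prop) -> Prop :=
| Borel_open U : is_open U -> Borel U
| Borel_compl A : Borel A -> Borel (fun M => ~ A M)
| Borel_cunion (A : nat -> X -> Prop) :
    (forall n, Borel (A n)) -> Borel (fun M => exists n, A n M).

Definition is_perm (g : nat -> nat) : Prop := bijective g.

Definition img_rel k (g : nat -> nat) (A : k.-tuple nat -> Prop) : k.-tuple nat -> Prop :=
  fun t => exists a, A a /\ t = map_tuple g a.

Definition in_Aut (g : nat -> nat) : Prop :=
  is_perm g /\ forall i (t : (b i).-tuple nat), img_rel g (@F i) t <-> F t.

Definition act (g : nat -> nat) (M : X) : X :=
  fun R t => img_rel g (M R) t.

Definition img_set (g : nat -> nat) (A : X -> Prop) : X -> Prop :=
  fun M => exists N, A N /\ M = act g N.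

Definition Aut_invariant (A : X -> Prop) : Prop :=
  forall g, in_Aut g -> forall M, img_set g A M <-> A M.

Inductive formula : Type :=
| fRel (R : I) (vs : (ar R).-tuple nat)
| fFam (i : nat) (vs : (b i).-tuple nat)
| fEq (x y : nat)
| fNot (phi : formula)
| fAnd (phis : nat -> formula)
| fOr (phis : nat -> formula)
| fEx (x : nat) (phi : formula)
| fAll (x : nat) (phi : formula).

Inductive free : nat -> formula -> Prop :=
| free_Rel x R vs : x \in tval vs -> free x (@fRel R vs)
| free_Fam x i vs : x \in tval vs -> free x (@fFam i vs)
| free_Eq1 x y : free x (fEq x y)
| free_Eq2 x y : free y (fEq x y)
| free_Not x phi : free x phi -> free x (fNot phi)
| free_And x phis n : free x (phis n) -> free x (fAnd phis)
| free_Or x phis n : free x (phis n) -> free x (fOr phis)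
| free_Ex x y phi : free x phi -> x <> y -> free x (fEx y phi)
| free_All x y phi : free x phi -> x <> y -> free x (fAll y phi).

Definition sentence (phi : formula) : Prop := forall x, ~ free x phi.

Definition upd (s : nat -> nat) (x v : nat) : nat -> nat :=
  fun y => if y == x then v else s y.

Fixpoint sat (M : X) (s : nat -> nat) (phi : formula) {struct phi} : Prop :=
  match phi with
  | fRel R vs => M R (map_tuple s vs)
  | fFam i vs => F (map_tuple s vs)
  | fEq x y => s x = s y
  | fNot psi => ~ sat M s psi
  | fAnd phis => forall n, sat M s (phis n)
  | fOr phis => exists n, sat M s (phis n)
  | fEx x psi => exists v, sat M (upd s x v) psi
  | fAll x psi => forall v, sat M (upd s x v) psi
  end.

(* M |= phi for a sentence phi (the assignment is irrelevant; we use the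
   constant 0 assignment). *)
Definition models (M : X) (phi : formula) : Prop := sat M (fun _ => 0) phi.

Definition definable (A : X -> Prop) : Prop :=
  exists phi, sentence phi /\ forall M, A M <-> models M phi.

End Logic.

Definition countable_type (I : Type) : Prop :=
  exists enc : I -> nat, injective enc.

(* Main.v *)
Require Import Defs.
From mathcomp Require Import all_boot.
From Stdlib Require Import Classical ClassicalEpsilon FunctionalExtensionality PropExtensionality Eqdep Setoid.
Set Implicit Arguments. Unset Strict Implicit. Unset Printing Implicit Defensive.

Section Main.
Variable I : Type.
Variable ar : I -> nat.
Variable b : nat -> nat.
Variable F : forall i : nat, (b i).-tuple nat -> Prop.

Notation form := (formula ar b).
Notation satM := (@sat I ar b F).

Definition env (ys : seq nat) : nat -> nat := fun j => nth 0 ys j.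

Definition fTrue : form := fAll 0 (fEq ar b 0 0).
Definition fFalse : form := fNot fTrue.
Definition fAnd2 (p q : form) : form := fAnd (fun n => if n is 0 then p else q).
Definition fOr2 (p q : form) : form := fOr (fun n => if n is 0 then p else q).
Definition fImp (p q : form) : form := fOr2 (fNot p) q.

Fixpoint fAlls (k m : nat) (phi : form) : form :=
  if m is m'.+1 then fAll k (fAlls k.+1 m' phi) else phi.
Fixpoint fExs (k m : nat) (phi : form) : form :=
  if m is m'.+1 then fEx k (fExs k.+1 m' phi) else phi.

Lemma sat_True M s : satM M s fTrue.
Proof. by move=> v. Qed.
Lemma sat_False M s : ~ satM M s fFalse.
Proof. by move=> H; apply: H; apply: sat_True. Qed.
Lemma sat_And2 M s p q : satM M s (fAnd2 p q) <-> satM M s p /\ satM M s q.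
Proof. split; [by move=> H; split; [apply: (H 0)|apply: (H 1)] | by case=> H1 H2 [|n]]. Qed.
Lemma sat_Or2 M s p q : satM M s (fOr2 p q) <-> satM M s p \/ satM M s q.
Proof. split; [by case=> [[|n]] H; [left|right] | by case=> H; [exists 0|exists 1]]. Qed.
Lemma sat_Imp M s p q : satM M s (fImp p q) <-> (satM M s p -> satM M s q).
Proof.
rewrite /fImp sat_Or2 /=; split; first by case=> H Hp //; case: (H Hp).
by move=> H; case: (classic (satM M s p)) => Hp; [right; apply: H|left].
Qed.

Lemma upd_env ys v : upd (env ys) (size ys) v = env (rcons ys v).
Proof.
apply: functional_extensionality => y; rewrite /upd /env nth_rcons; idtac.
case: (ltngtP y (size ys)) => [lt|gt|eq] //.
by rewrite nth_default // ltnW.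
Qed.

Lemma sat_Alls M ys m phi :
  satM M (env ys) (fAlls (size ys) m phi) <-> forall vs, size vs = m -> satM M (env (ys ++ vs)) phi.
Proof.
elim: m ys => [|m IH] ys /=.
  split; first by move=> H [|//] _; rewrite cats0.
  by move=> H; have := H [::] erefl; rewrite cats0.
split.
  move=> H [//|v vs] /= [Hs]; have := H v; rewrite upd_env.
  by rewrite -(size_rcons ys v) IH => /(_ vs Hs); rewrite cat_rcons.
move=> H v; rewrite upd_env -(size_rcons ys v) IH => vs Hs.
by rewrite cat_rcons; apply: H => /=; rewrite Hs.
Qed.

Lemma sat_Exs M ys m phi :
  satM M (env ys) (fExs (size ys) m phi) <-> exists vs, size vs = m /\ satM M (env (ys ++ vs)) phi.
Proof.
elim: m ys => [|m IH] ys /=.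
  split; first by move=> H; exists [::]; rewrite cats0.
  move=> [vs [Hvs Hs]]. case: vs Hvs Hs => [|//] _. by rewrite cats0.
split.
  case=> v; rewrite upd_env -(size_rcons ys v) IH => -[vs [Hs H]].
  by exists (v :: vs); rewrite -cat_rcons /= Hs.
move=> [vs0 [Hvs H]]. case: vs0 Hvs H => [//|v vs] /= [Hs] H; exists v.
by rewrite upd_env -(size_rcons ys v) IH; exists vs; rewrite cat_rcons.
Qed.

Definition bnd (k : nat) (phi : form) := forall x, free x phi -> x < k.

Lemma bnd_mono k k' phi : k <= k' -> bnd k phi -> bnd k' phi.
Proof. by move=> le H x /H lt; apply: leq_trans le. Qed.
Lemma bnd_True k : bnd k fTrue.
Proof.
move=> x H; inversion H; subst.
match goal with H' : free _ (fEq _ _ _ _) |- _ => inversion H'; subst; congruence end.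
Qed.
Lemma bnd_Not k p : bnd k p -> bnd k (fNot p).
Proof. move=> H x Hx; inversion Hx; subst; eapply H; eassumption. Qed.
Lemma bnd_False k : bnd k fFalse.
Proof. exact/bnd_Not/bnd_True. Qed.
Lemma bnd_And k ps : (forall n, bnd k (ps n)) -> bnd k (fAnd ps).
Proof. move=> H x Hx; inversion Hx; subst; eapply H; eassumption. Qed.
Lemma bnd_Or k ps : (forall n, bnd k (ps n)) -> bnd k (fOr ps).
Proof. move=> H x Hx; inversion Hx; subst; eapply H; eassumption. Qed.
Lemma bnd_And2 k p q : bnd k p -> bnd k q -> bnd k (fAnd2 p q).
Proof. by move=> Hp Hq; apply: bnd_And => -[|n]. Qed.
Lemma bnd_Or2 k p q : bnd k p -> bnd k q -> bnd k (fOr2 p q).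
Proof. by move=> Hp Hq; apply: bnd_Or => -[|n]. Qed.
Lemma bnd_Imp k p q : bnd k p -> bnd k q -> bnd k (fImp p q).
Proof. by move=> Hp Hq; apply: bnd_Or2 => //; apply: bnd_Not. Qed.
Lemma bnd_All k p : bnd k.+1 p -> bnd k (fAll k p).
Proof.
move=> H x Hx; inversion Hx; subst.
match goal with H2 : free x p |- _ => have := H _ H2 end.
by rewrite ltnS leq_eqVlt => /orP[/eqP//|].
Qed.
Lemma bnd_Ex k p : bnd k.+1 p -> bnd k (fEx k p).
Proof.
move=> H x Hx; inversion Hx; subst.
match goal with H2 : free x p |- _ => have := H _ H2 end.
by rewrite ltnS leq_eqVlt => /orP[/eqP//|].
Qed.
Lemma bnd_Alls k m p : bnd (k + m) p -> bnd k (fAlls k m p).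
Proof.
elim: m k => [|m IH] k /=; first by rewrite addn0.
by move=> H; apply: bnd_All; apply: IH; rewrite addSnnS.
Qed.
Lemma bnd_Exs k m p : bnd (k + m) p -> bnd k (fExs k m p).
Proof.
elim: m k => [|m IH] k /=; first by rewrite addn0.
by move=> H; apply: bnd_Ex; apply: IH; rewrite addSnnS.
Qed.
Lemma bnd_Eq k x y : x < k -> y < k -> bnd k (fEq ar b x y).
Proof. by move=> Hx Hy z Hz; inversion Hz; subst. Qed.
Lemma bnd_Fam k i (vs : (b i).-tuple nat) : all (fun j => j < k) vs -> bnd k (@fFam I ar b i vs).
Proof.
move=> H z Hz; inversion Hz; subst.
match goal with H3 : existT _ _ _ = existT _ _ _ |- _ => have E := inj_pair2 _ _ _ _ _ H3 end.
by subst; apply: (allP H).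
Qed.
Lemma bnd_Rel k R (vs : (ar R).-tuple nat) : all (fun j => j < k) vs -> bnd k (@fRel I ar b R vs).
Proof.
move=> H z Hz; inversion Hz; subst.
match goal with H3 : existT _ _ _ = existT _ _ _ |- _ => have E := inj_pair2 _ _ _ _ _ H3 end.
by subst; apply: (allP H).
Qed.


Definition pb (P : Prop) : bool := if excluded_middle_informative P then true else false.
Lemma pbP (P : Prop) : pb P = true <-> P.
Proof. by rewrite /pb; case: excluded_middle_informative. Qed.

Lemma tup_eq n (t1 t2 : n.-tuple nat) : val t1 = val t2 -> t1 = t2.
Proof. exact: val_inj. Qed.

Definition E0 (xs ys : seq nat) : Prop :=
  size xs = size ys /\
  (forall j k, j < size xs -> k < size xs -> (nth 0 xs j == nth 0 xs k) = (nth 0 ys j == nth 0 ys k)) /\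
  (forall i (u : (b i).-tuple nat), all (fun j => j < size xs) u ->
      (F (map_tuple (nth 0 xs) u) <-> F (map_tuple (nth 0 ys) u))).

Inductive ord := OZ | OS of ord | OL of (nat -> ord).

Fixpoint E (o : ord) (xs ys : seq nat) : Prop :=
  match o with
  | OZ => E0 xs ys
  | OS o => E o xs ys /\ (forall c, exists d, E o (rcons xs c) (rcons ys d)) /\
                        (forall d, exists c, E o (rcons xs c) (rcons ys d))
  | OL f => E0 xs ys /\ forall n, E (f n) xs ys
  end.

Lemma E_E0 o xs ys : E o xs ys -> E0 xs ys.
Proof. elim: o xs ys => [|o IH|f IH] xs ys //=; [by move=> [H _]; apply: IH | by case]. Qed.

Lemma E_size o xs ys : E o xs ys -> size xs = size ys.
Proof. by move/E_E0=> [->]. Qed.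

Lemma map_nth_rcons (xs pi : seq nat) c :
  all (fun j => j < size xs) pi ->
  map (nth 0 (rcons xs c)) (rcons pi (size xs)) = rcons (map (nth 0 xs) pi) c.
Proof.
move=> H; rewrite map_rcons nth_rcons ltnn eqxx; congr rcons.
by apply/eq_in_map => j /(allP H) lt; rewrite nth_rcons lt.
Qed.

Lemma all_rcons_lt (xs pi : seq nat) c :
  all (fun j => j < size xs) pi -> all (fun j => j < size (rcons xs c)) (rcons pi (size xs)).
Proof.
move=> H; rewrite all_rcons size_rcons ltnSn /=.
by apply/allP => j /(allP H) lt; apply: ltn_trans lt _.
Qed.

Lemma E0_reidx xs ys pi : E0 xs ys -> all (fun j => j < size xs) pi ->
  E0 (map (nth 0 xs) pi) (map (nth 0 ys) pi).
Proof.
move=> [Hs [He Hf]] Hpi; split; first by rewrite !size_map.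
split.
  move=> j k; rewrite size_map => Hj Hk.
  rewrite !(nth_map 0) //; apply: He; exact: (allP Hpi _ (mem_nth 0 _)).
move=> i u Hu.
have Hu' : all (fun j => j < size xs) (map_tuple (nth 0 pi) u).
  apply/allP => x /mapP [j Hj ->]; apply: (allP Hpi); apply: mem_nth.
  by move: (allP Hu _ Hj); rewrite size_map.
have E1 : forall zs, size zs = size xs ->
   map_tuple (nth 0 (map (nth 0 zs) pi)) u = map_tuple (nth 0 zs) (map_tuple (nth 0 pi) u).
  move=> zs Hz; apply: tup_eq => /=; rewrite -map_comp; apply/eq_in_map => j Hj /=.
  by rewrite (nth_map 0) //; move: (allP Hu _ Hj); rewrite size_map.
by rewrite !E1 //; apply: Hf.
Qed.

Lemma E_reidx o xs ys pi : E o xs ys -> all (fun j => j < size xs) pi ->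
  E o (map (nth 0 xs) pi) (map (nth 0 ys) pi).
Proof.
elim: o xs ys pi => [|o IH|f IH] xs ys pi /=.
- exact: E0_reidx.
- move=> [H [H1 H2]] Hpi; split; first exact: IH.
  have Hs := E_size H.
  split.
    move=> c; have [d Hd] := H1 c; exists d.
    have := IH _ _ _ Hd (all_rcons_lt c Hpi).
    by rewrite map_nth_rcons // Hs map_nth_rcons // -Hs.
  move=> d; have [c Hc] := H2 d; exists c.
  have := IH _ _ _ Hc (all_rcons_lt c Hpi).
  by rewrite map_nth_rcons // Hs map_nth_rcons // -Hs.
- move=> [H0 H] Hpi; split; first exact: E0_reidx.
  by move=> n; apply: IH.
Qed.

Lemma Aut_F g : in_Aut F g -> forall i (u : (b i).-tuple nat), F (map_tuple g u) <-> F u.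
Proof.
move=> [[h gh hg] HF] i u; rewrite -HF; split; last by move=> Hu; exists u.
move=> [x [Hx Ex]].
have -> : u = x; last by [].
apply: tup_eq; move: Ex => /(congr1 val) /= /(congr1 (map h)).
by rewrite -!map_comp !(eq_map gh) !map_id.
Qed.

Lemma Aut_inj g : in_Aut F g -> injective g.
Proof. by move=> [Hb _]; apply: bij_inj. Qed.

Lemma E_aut g o xs : in_Aut F g -> E o xs (map g xs).
Proof.
move=> Hg; have Hi := Aut_inj Hg.
have H0 : forall xs, E0 xs (map g xs).
  move=> zs; split; first by rewrite size_map.
  split; first by move=> j k Hj Hk; rewrite !(nth_map 0) // (inj_eq Hi).
  move=> i u Hu.
  have -> : map_tuple (nth 0 (map g zs)) u = map_tuple g (map_tuple (nth 0 zs) u).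
    apply: tup_eq => /=; rewrite -map_comp; apply/eq_in_map => j Hj /=.
    by rewrite (nth_map 0) //; apply: (allP Hu).
  exact: iff_sym (Aut_F Hg _).
elim: o xs => [|o IH|f IH] xs /=; first exact: H0.
- split; first exact: IH.
  split; first by move=> c; exists (g c); rewrite -map_rcons.
  move: Hg => [[h gh hg] _] d; exists (h d); by rewrite -{2}(hg d) -map_rcons.
- by split; [apply: H0 | move=> n; apply: IH].
Qed.

Lemma E_lam : exists lam, forall xs ys, E lam xs ys -> forall o, E o xs ys.
Proof.
have H : forall n, exists o, forall xs ys, @unpickle (seq nat * seq nat)%type n = Some (xs, ys) ->
     E o xs ys -> forall o', E o' xs ys.
  move=> n; case: unpickle => [[xs ys]|]; last by exists OZ.
  case: (classic (forall o', E o' xs ys)) => [Hall|Hn].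
    by exists OZ => xs' ys' [<- <-].
  have [o Ho] := not_all_ex_not _ _ Hn; by exists o => xs' ys' [<- <-].
pose f n := proj1_sig (constructive_indefinite_description _ (H n)).
exists (OL f) => xs ys [_ Hl].
have := proj2_sig (constructive_indefinite_description _ (H (pickle (xs, ys)))).
move=> /(_ xs ys (pickleK _)); apply; exact: Hl.
Qed.

Definition PhiZ (xs : seq nat) : form :=
  fAnd (fun n => match @unpickle ((nat * nat) + (nat * seq nat))%type n with
   | Some (inl (j, k)) => if (j < size xs) && (k < size xs) then
        (if nth 0 xs j == nth 0 xs k then fEq ar b j k else fNot (fEq ar b j k)) else fTrue
   | Some (inr (i, u)) => match (insub u : option ((b i).-tuple nat)) with
        | Some t => if all (fun j => j < size xs) t then
             (if pb (F (map_tuple (nth 0 xs) t)) then @fFam I ar b i t else fNot (@fFam I ar b i t))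
             else fTrue
        | None => fTrue end
   | None => fTrue end).

Fixpoint Phi (o : ord) (xs : seq nat) : form :=
  match o with
  | OZ => PhiZ xs
  | OS o => fAnd2 (Phi o xs) (fAnd2 (fAnd (fun c => fEx (size xs) (Phi o (rcons xs c))))
                                    (fAll (size xs) (fOr (fun c => Phi o (rcons xs c)))))
  | OL f => fAnd2 (PhiZ xs) (fAnd (fun n => Phi (f n) xs))
  end.

Lemma bnd_PhiZ xs : bnd (size xs) (PhiZ xs).
Proof.
apply: bnd_And => n; case: unpickle => [[[j k]|[i u]]|]; try exact: bnd_True.
  case: ifP => [/andP[Hj Hk]|_]; last exact: bnd_True.
  by case: ifP => _; [|apply: bnd_Not]; apply: bnd_Eq.
case: insub => [t|]; last exact: bnd_True.
case: ifP => [Ht|_]; last exact: bnd_True.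
by case: ifP => _; [|apply: bnd_Not]; apply: bnd_Fam.
Qed.

Lemma bnd_Phi o xs : bnd (size xs) (Phi o xs).
Proof.
elim: o xs => [|o IH|f IH] xs /=; first exact: bnd_PhiZ.
- apply: bnd_And2 => //; apply: bnd_And2.
    by apply: bnd_And => c; apply: bnd_Ex; rewrite -(size_rcons xs c).
  by apply: bnd_All; apply: bnd_Or => c; rewrite -(size_rcons xs c).
- by apply: bnd_And2; [apply: bnd_PhiZ | apply: bnd_And].
Qed.

Lemma sat_PhiZ M xs ys : size ys = size xs -> (satM M (env ys) (PhiZ xs) <-> E0 xs ys).
Proof.
move=> Hs; split.
  move=> H; split; first by [].
  split.
    move=> j k Hj Hk; have := H (pickle (@inl (nat * nat) (nat * seq nat) (j, k))).
    rewrite pickleK Hj Hk /=; rewrite /env.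
    case: eqP => [_ /= ->|_ /= Hne]; first by rewrite eqxx.
    by apply/esym/eqP.
  move=> i u Hu; have := H (pickle (@inr (nat * nat) (nat * seq nat) (i, val u))).
  rewrite pickleK /= valK Hu.
  case: (pb _) (pbP (F (map_tuple (nth 0 xs) u))) => -[H1 H2] /= H3.
    by split=> _; [exact: H3 | exact: H1].
  by split=> Hx; [have := H2 Hx | case: (H3 Hx)].
move=> [_ [He Hf]] n; case: unpickle => [[[j k]|[i u]]|]; try exact: sat_True.
  case: ifP => [/andP[Hj Hk]|_]; last exact: sat_True.
  rewrite (He _ _ Hj Hk) /= /env; by case: eqP.
case: insub => [t|]; last exact: sat_True.
case: ifP => [Ht|_]; last exact: sat_True.
case: (pb _) (pbP (F (map_tuple (nth 0 xs) t))) => -[H1 H2] /=.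
  by apply/(Hf _ _ Ht)/H1.
by move=> /(Hf _ _ Ht) /H2.
Qed.

Lemma sat_Ex_env M ys p : satM M (env ys) (fEx (size ys) p) <-> exists v, satM M (env (rcons ys v)) p.
Proof. by split=> -[v H]; exists v; move: H; rewrite upd_env. Qed.
Lemma sat_All_env M ys p : satM M (env ys) (fAll (size ys) p) <-> forall v, satM M (env (rcons ys v)) p.
Proof. by split=> H v; move: (H v); rewrite upd_env. Qed.
Lemma sat_And_iff M s ps : satM M s (fAnd ps) <-> forall n, satM M s (ps n).
Proof. by []. Qed.
Lemma sat_Or_iff M s ps : satM M s (fOr ps) <-> exists n, satM M s (ps n).
Proof. by []. Qed.
Lemma sat_Not_iff M s p : satM M s (fNot p) <-> ~ satM M s p.
Proof. by []. Qed.

Lemma sat_Phi M o xs ys : size ys = size xs -> (satM M (env ys) (Phi o xs) <-> E o xs ys).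
Proof.
elim: o xs ys => [|o IH|f IH] xs ys Hs; rewrite [Phi _ _]/=; first exact: sat_PhiZ.
- have Hs' c d : size (rcons ys d) = size (rcons xs c) by rewrite !size_rcons Hs.
  rewrite !sat_And2 IH // sat_And_iff -Hs sat_All_env; split.
    move=> [H1 [H2 H3]]; split=> //; split.
      move=> c; have := H2 c; rewrite sat_Ex_env => -[d]; rewrite IH //; by exists d.
    move=> d; have := H3 d; rewrite sat_Or_iff => -[c]; rewrite IH //; by exists c.
  move=> [H1 [H2 H3]]; split=> //; split.
    move=> c; have [d Hd] := H2 c; rewrite sat_Ex_env; exists d; rewrite IH //.
  move=> d; have [c Hc] := H3 d; rewrite sat_Or_iff; exists c; rewrite IH //.
- rewrite sat_And2 sat_PhiZ // sat_And_iff; split; move=> [H1 H2]; split=> // n.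
    by apply/(IH n xs ys Hs); apply: H2.
  by apply/(IH n xs ys Hs); apply: H2.
Qed.


Section Gen.
Variable lam : ord.
Hypothesis Hlam : forall xs ys, E lam xs ys -> forall o, E o xs ys.

Definition C xs ys := E lam xs ys.

Lemma C_E0 xs ys : C xs ys -> E0 xs ys.
Proof. exact: E_E0. Qed.
Lemma C_size xs ys : C xs ys -> size xs = size ys.
Proof. exact: E_size. Qed.
Lemma C_dom xs ys : C xs ys -> forall c, exists d, C (rcons xs c) (rcons ys d).
Proof. by move=> /Hlam /(_ (OS lam)) [_ [H _]]. Qed.
Lemma C_rng xs ys : C xs ys -> forall d, exists c, C (rcons xs c) (rcons ys d).
Proof. by move=> /Hlam /(_ (OS lam)) [_ [_ H]]. Qed.
Lemma C_reidx xs ys pi : C xs ys -> all (fun j => j < size xs) pi ->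
  C (map (nth 0 xs) pi) (map (nth 0 ys) pi).
Proof. exact: E_reidx. Qed.
Lemma C_aut g xs : in_Aut F g -> C xs (map g xs).
Proof. exact: E_aut. Qed.

Definition prefix (p q : seq nat * seq nat) :=
  exists s1 s2, q.1 = p.1 ++ s1 /\ q.2 = p.2 ++ s2.

Lemma prefix_refl p : prefix p p.
Proof. by exists [::], [::]; rewrite !cats0. Qed.
Lemma prefix_trans p q r : prefix p q -> prefix q r -> prefix p r.
Proof.
move=> [s1 [s2 [H1 H2]]] [t1 [t2 [K1 K2]]]; exists (s1 ++ t1), (s2 ++ t2).
by rewrite K1 K2 H1 H2 !catA.
Qed.

Lemma nth_prefix1 p q j : prefix p q -> j < size p.1 -> nth 0 q.1 j = nth 0 p.1 j.
Proof. by move=> [s1 [s2 [-> _]]] Hj; rewrite nth_cat Hj. Qed.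
Lemma nth_prefix2 p q j : prefix p q -> j < size p.2 -> nth 0 q.2 j = nth 0 p.2 j.
Proof. by move=> [s1 [s2 [_ ->]]] Hj; rewrite nth_cat Hj. Qed.
Lemma mem_prefix1 p q x : prefix p q -> x \in p.1 -> x \in q.1.
Proof. by move=> [s1 [s2 [-> _]]] H; rewrite mem_cat H. Qed.
Lemma mem_prefix2 p q x : prefix p q -> x \in p.2 -> x \in q.2.
Proof. by move=> [s1 [s2 [_ ->]]] H; rewrite mem_cat H. Qed.

Variable D : nat -> seq nat -> seq nat -> Prop.
Hypothesis HD : forall n xs ys, C xs ys ->
  exists xs2 ys2, C (xs ++ xs2) (ys ++ ys2) /\ D n (xs ++ xs2) (ys ++ ys2).

Definition Cond := {p : seq nat * seq nat | C p.1 p.2}.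

Lemma step_ex n (p : Cond) : exists q : Cond,
  prefix (proj1_sig p) (proj1_sig q) /\ n \in (proj1_sig q).1 /\ n \in (proj1_sig q).2 /\
  exists r, C r.1 r.2 /\ D n r.1 r.2 /\ prefix r (proj1_sig q).
Proof.
case: p => [[xs ys] /= Hp].
have [xs2 [ys2 [H1 H2]]] := HD n Hp.
have [d Hd] := C_dom H1 n.
have [c Hc] := C_rng Hd n.
exists (exist (fun p => C p.1 p.2) (rcons (rcons (xs ++ xs2) n) c, rcons (rcons (ys ++ ys2) d) n) Hc) => /=.
split.
  by exists (rcons (rcons xs2 n) c), (rcons (rcons ys2 d) n); rewrite !rcons_cat.
split; first by rewrite mem_rcons in_cons mem_rcons mem_head orbT.
split; first by rewrite mem_rcons mem_head.
exists (xs ++ xs2, ys ++ ys2); split=> //; split=> //.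
by exists [:: n; c], [:: d; n]; rewrite /= -!cats1 -!catA.
Qed.

Definition step n (p : Cond) : Cond := proj1_sig (constructive_indefinite_description _ (step_ex n p)).
Lemma step_spec n p : prefix (proj1_sig p) (proj1_sig (step n p)) /\ n \in (proj1_sig (step n p)).1 /\ n \in (proj1_sig (step n p)).2 /\
  exists r, C r.1 r.2 /\ D n r.1 r.2 /\ prefix r (proj1_sig (step n p)).
Proof. exact: (proj2_sig (constructive_indefinite_description _ (step_ex n p))). Qed.

Variable p0 : Cond.
Fixpoint chain n : Cond := if n is m.+1 then step m (chain m) else p0.
Definition ch n := proj1_sig (chain n).

Lemma chC n : C (ch n).1 (ch n).2.
Proof. exact: (proj2_sig (chain n)). Qed.

Lemma ch_mono m m' : m <= m' -> prefix (ch m) (ch m').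
Proof.
elim: m' => [|m' IH]; first by rewrite leqn0 => /eqP ->; apply: prefix_refl.
rewrite leq_eqVlt => /orP [/eqP ->|]; first exact: prefix_refl.
rewrite ltnS => /IH H; apply: prefix_trans H _; exact: (step_spec m' (chain m')).1.
Qed.

Lemma ch_dom x : x \in (ch x.+1).1.
Proof. exact: (step_spec x (chain x)).2.1. Qed.
Lemma ch_rng x : x \in (ch x.+1).2.
Proof. exact: (step_spec x (chain x)).2.2.1. Qed.

Definition gg x := nth 0 (ch x.+1).2 (index x (ch x.+1).1).
Definition hh y := nth 0 (ch y.+1).1 (index y (ch y.+1).2).

Lemma size_ch n : size (ch n).1 = size (ch n).2.
Proof. exact: C_size (chC n). Qed.

Lemma gg_spec m j : j < size (ch m).1 -> gg (nth 0 (ch m).1 j) = nth 0 (ch m).2 j.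
Proof.
move=> Hj; set x := nth 0 (ch m).1 j.
set P := ch x.+1; set k := index x P.1.
have Hk : k < size P.1 by rewrite index_mem ch_dom.
set N := maxn m x.+1.
have HmN : prefix (ch m) (ch N) by apply: ch_mono; rewrite leq_maxl.
have HPN : prefix P (ch N) by apply: ch_mono; rewrite leq_maxr.
have [_ [He _]] := C_E0 (chC N).
have Hj' : j < size (ch N).1 by case: HmN => s1 [s2 [-> _]]; rewrite size_cat ltn_addr.
have Hk' : k < size (ch N).1 by case: HPN => s1 [s2 [-> _]]; rewrite size_cat ltn_addr.
have := He j k Hj' Hk'.
rewrite (nth_prefix1 HmN Hj) (nth_prefix1 HPN Hk) nth_index ?ch_dom // eqxx.
move=> /esym /eqP Heq.
have E1 : nth 0 (ch N).2 j = nth 0 (ch m).2 j by apply: nth_prefix2; rewrite // -size_ch.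
have E2 : nth 0 (ch N).2 k = nth 0 P.2 k by apply: nth_prefix2; rewrite // -size_ch.
by rewrite -E1 Heq E2.
Qed.

Lemma map_gg m : map gg (ch m).1 = (ch m).2.
Proof.
apply: (@eq_from_nth _ 0); first by rewrite size_map size_ch.
move=> j; rewrite size_map => Hj; rewrite (nth_map 0) //; exact: gg_spec.
Qed.

Lemma gg_inj : injective gg.
Proof.
move=> x y E1.
set N := maxn x.+1 y.+1.
have Hx : prefix (ch x.+1) (ch N) by apply: ch_mono; rewrite leq_maxl.
have Hy : prefix (ch y.+1) (ch N) by apply: ch_mono; rewrite leq_maxr.
have mx : x \in (ch N).1 := mem_prefix1 Hx (ch_dom x).
have my : y \in (ch N).1 := mem_prefix1 Hy (ch_dom y).
have [_ [He _]] := C_E0 (chC N).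
have kx : index x (ch N).1 < size (ch N).1 by rewrite index_mem.
have ky : index y (ch N).1 < size (ch N).1 by rewrite index_mem.
have := He _ _ kx ky; rewrite !nth_index // -(gg_spec kx) -(gg_spec ky) !nth_index // E1 eqxx.
by move=> /eqP.
Qed.

Lemma gg_hh y : gg (hh y) = y.
Proof.
have Hk : index y (ch y.+1).2 < size (ch y.+1).1 by rewrite size_ch index_mem ch_rng.
by rewrite /hh gg_spec // nth_index // ch_rng.
Qed.

Lemma ex_bound (s : seq nat) : exists N, forall x, x \in s -> x < N.
Proof.
elim: s => [|a s [N HN]]; first by exists 0.
exists (maxn a.+1 N) => x; rewrite in_cons => /orP [/eqP ->|/HN H].
  by rewrite leq_maxl.
by apply: leq_trans H _; rewrite leq_maxr.
Qed.

Lemma gg_F i (u : (b i).-tuple nat) : F (map_tuple gg u) <-> F u.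
Proof.
have [N HN] := ex_bound u.
have Hm : forall x, x \in u -> x \in (ch N).1.
  move=> x /HN H; apply: (mem_prefix1 (ch_mono H)); exact: ch_dom.
set Q := ch N.
pose pi := map_tuple (fun x => index x Q.1) u.
have Hpi : all (fun j => j < size Q.1) pi.
  by apply/allP => j /mapP [x Hx ->]; rewrite index_mem Hm.
have E1 : map_tuple (nth 0 Q.1) pi = u.
  apply: tup_eq => /=; rewrite -map_comp -[RHS]map_id; apply/eq_in_map => x Hx /=.
  by rewrite nth_index // Hm.
have E2 : map_tuple (nth 0 Q.2) pi = map_tuple gg u.
  apply: tup_eq => /=; rewrite -map_comp; apply/eq_in_map => x Hx /=.
  by rewrite -gg_spec ?index_mem ?Hm // nth_index // Hm.
have [_ [_ Hf]] := C_E0 (chC N).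
rewrite -E2 -E1; exact: iff_sym (Hf _ _ Hpi).
Qed.

Lemma gg_Aut : in_Aut F gg.
Proof.
have Hc : cancel gg hh by move=> x; apply: gg_inj; rewrite gg_hh.
split; first by exists hh => // y; apply: gg_hh.
move=> i t; split.
  by move=> [a [Ha ->]]; apply/gg_F.
move=> Ht; exists (map_tuple hh t); split.
  apply/gg_F; have -> : map_tuple gg (map_tuple hh t) = t; last by [].
  by apply: tup_eq => /=; rewrite -map_comp -[RHS]map_id; apply/eq_in_map => x _ /=; rewrite gg_hh.
by apply: tup_eq => /=; rewrite -map_comp -[LHS]map_id; apply/eq_in_map => x _ /=; rewrite gg_hh.
Qed.

Lemma gg_D n : exists xs ys, D n xs ys /\ map gg xs = ys.
Proof.
have [_ [_ [_ [r [Cr [Dr Pr]]]]]] := step_spec n (chain n).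
exists r.1, r.2; split=> //.
have := map_gg n.+1; rewrite /ch /= .
case: Pr => s1 [s2 [-> ->]]; rewrite map_cat => /eqP.
rewrite eqseq_cat ?size_map ?(C_size Cr) // => /andP [/eqP -> _] //.
Qed.

End Gen.

Lemma generic lam (Hlam : forall xs ys, E lam xs ys -> forall o, E o xs ys)
  (D : nat -> seq nat -> seq nat -> Prop) :
  (forall n xs ys, C lam xs ys -> exists xs2 ys2, C lam (xs ++ xs2) (ys ++ ys2) /\ D n (xs ++ xs2) (ys ++ ys2)) ->
  forall xs ys, C lam xs ys ->
  exists g, in_Aut F g /\ map g xs = ys /\ forall n, exists xs' ys', D n xs' ys' /\ map g xs' = ys'.
Proof.
move=> HD xs ys Hc.
pose p0 := exist (fun p => C lam p.1 p.2) (xs, ys) Hc.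
exists (gg Hlam HD p0); split; first exact: gg_Aut.
split; first exact: (map_gg Hlam HD p0 0).
exact: gg_D.
Qed.


Section Forcing.
Variable lam : ord.
Hypothesis Hlam : forall xs ys, E lam xs ys -> forall o, E o xs ys.
Local Notation C := (C lam).

Definition incl (xs ys xs' ys' : seq nat) :=
  forall j, j < size xs -> exists k, k < size xs' /\ nth 0 xs' k = nth 0 xs j /\ nth 0 ys' k = nth 0 ys j.

Lemma incl_pi xs ys xs' ys' : size xs = size ys -> incl xs ys xs' ys' ->
  exists pi, all (fun j => j < size xs') pi /\ map (nth 0 xs') pi = xs /\ map (nth 0 ys') pi = ys.
Proof.
move=> Hs H.
have H' : forall j, exists k, j < size xs -> k < size xs' /\ nth 0 xs' k = nth 0 xs j /\ nth 0 ys' k = nth 0 ys j.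
  move=> j; case: (ltnP j (size xs)) => Hj; last by exists 0.
  by have [k Hk] := H j Hj; exists k.
pose f j := proj1_sig (constructive_indefinite_description _ (H' j)).
have Hf j : j < size xs -> f j < size xs' /\ nth 0 xs' (f j) = nth 0 xs j /\ nth 0 ys' (f j) = nth 0 ys j.
  exact: (proj2_sig (constructive_indefinite_description _ (H' j))).
exists (map f (iota 0 (size xs))); split.
  by apply/allP => k /mapP [j]; rewrite mem_iota add0n => /andP [_ /Hf [? _]] ->.
split.
  apply: (@eq_from_nth _ 0); rewrite !size_map size_iota // => j Hj.
  by rewrite (nth_map 0) ?size_map ?size_iota // (nth_map 0) ?size_iota // nth_iota // add0n (Hf _ Hj).2.1.
apply: (@eq_from_nth _ 0); rewrite !size_map size_iota // => j Hj.
by rewrite (nth_map 0) ?size_map ?size_iota // (nth_map 0) ?size_iota // nth_iota // add0n (Hf _ Hj).2.2.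
Qed.

Lemma incl_prefix xs ys a vs : size xs = size ys -> incl xs ys (xs ++ a) (ys ++ vs).
Proof.
move=> Hs j Hj; exists j; split; first by rewrite size_cat ltn_addr.
by rewrite !nth_cat Hj -Hs Hj.
Qed.

Lemma incl_suffix xs ys a vs : size xs = size ys -> incl a vs (xs ++ a) (ys ++ vs).
Proof.
move=> Hs j Hj; exists (size xs + j); split; first by rewrite size_cat ltn_add2l.
by rewrite !nth_cat ltnNge leq_addr /= -Hs ltnNge leq_addr /= !addKn.
Qed.

Lemma C_join xs ys xs' ys' : C xs ys -> C xs' ys' -> incl xs ys xs' ys' -> C (xs ++ xs') (ys ++ ys').
Proof.
move=> H H' Hi; have [pi [Hpi [E1 E2]]] := incl_pi (C_size H) Hi.
have := @C_reidx lam _ _ (pi ++ iota 0 (size xs')) H'.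
rewrite !map_cat E1 E2 map_nth_iota0 // take_size (C_size H') map_nth_iota0 // take_size -(C_size H').
apply; rewrite all_cat Hpi /=; apply/allP => j; by rewrite mem_iota.
Qed.

Definition Ext (R : seq nat -> seq nat -> Prop) xs ys :=
  forall a vs, size vs = size a -> C (xs ++ a) (ys ++ vs) -> R (xs ++ a) (ys ++ vs).
Definition Exs (R : seq nat -> seq nat -> Prop) xs ys :=
  exists a vs, size vs = size a /\ C (xs ++ a) (ys ++ vs) /\ R (xs ++ a) (ys ++ vs).
Definition Mono (R : seq nat -> seq nat -> Prop) :=
  forall xs ys xs' ys', C xs ys -> C xs' ys' -> incl xs ys xs' ys' -> R xs ys -> R xs' ys'.
Definition Down (R : seq nat -> seq nat -> Prop) :=
  forall xs ys xs' ys', C xs ys -> C xs' ys' -> incl xs ys xs' ys' -> R xs' ys' -> R xs ys.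

Lemma Mono_Ext R : Down R -> Mono (Ext R).
Proof.
move=> HR xs ys xs' ys' H H' Hi HE a vs Hv Ha.
have Hs := C_size H; have Hs' := C_size H'.
have Hi2 : incl xs ys (xs' ++ a) (ys' ++ vs).
  move=> j /Hi [k [Hk [E1 E2]]]; exists k; split; first by rewrite size_cat ltn_addr.
  by rewrite !nth_cat Hk -Hs' Hk.
have Cj := C_join H Ha Hi2.
have := HE (xs' ++ a) (ys' ++ vs); rewrite !size_cat Hv Hs' => /(_ erefl Cj).
apply: HR => //; exact: incl_suffix.
Qed.

Lemma Down_Exs R : Mono R -> Down (Exs R).
Proof.
move=> HR xs ys xs' ys' H H' Hi [a [vs [Hv [Ca Ra]]]].
have Hs := C_size H; have Hs' := C_size H'.
have Hi2 : incl xs ys (xs' ++ a) (ys' ++ vs).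
  move=> j /Hi [k [Hk [E1 E2]]]; exists k; split; first by rewrite size_cat ltn_addr.
  by rewrite !nth_cat Hk -Hs' Hk.
exists (xs' ++ a), (ys' ++ vs); split; first by rewrite !size_cat Hv Hs'.
have Cj := C_join H Ca Hi2; split=> //.
apply: HR Ra => //; exact: incl_suffix.
Qed.

Lemma Down_not R : Mono R -> Down (fun xs ys => ~ R xs ys).
Proof. by move=> HR xs ys xs' ys' H H' Hi HN Hr; apply: HN; apply: HR Hr. Qed.

Definition Cf xs := Phi lam xs.

Definition FAb xs (P : seq nat -> form) n : form :=
  match @unpickle (seq nat) n with
     | Some a => fAlls (size xs) (size a) (fImp (Cf (xs ++ a)) (P (xs ++ a)))
     | None => fTrue end.
Definition FA xs P := fAnd (FAb xs P).
Definition FEb xs (P : seq nat -> form) n : form :=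
  match @unpickle (seq nat) n with
     | Some a => fExs (size xs) (size a) (fAnd2 (Cf (xs ++ a)) (P (xs ++ a)))
     | None => fFalse end.
Definition FE xs P := fOr (FEb xs P).

Lemma bnd_FA xs P : (forall a, bnd (size (xs ++ a)) (P (xs ++ a))) -> bnd (size xs) (FA xs P).
Proof.
move=> H; apply: bnd_And => n; rewrite /FAb; case: unpickle => [a|]; last exact: bnd_True.
apply: bnd_Alls; rewrite -size_cat; apply: bnd_Imp => //; exact: bnd_Phi.
Qed.
Lemma bnd_FE xs P : (forall a, bnd (size (xs ++ a)) (P (xs ++ a))) -> bnd (size xs) (FE xs P).
Proof.
move=> H; apply: bnd_Or => n; rewrite /FEb; case: unpickle => [a|]; last exact: bnd_False.
apply: bnd_Exs; rewrite -size_cat; apply: bnd_And2 => //; exact: bnd_Phi.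
Qed.

Lemma sat_FA M xs ys P : size ys = size xs ->
  (satM M (env ys) (FA xs P) <-> Ext (fun xs' ys' => satM M (env ys') (P xs')) xs ys).
Proof.
move=> Hs; split.
  move=> H a vs Hv Ca; have := proj1 (sat_And_iff _ _ _) H (pickle a); rewrite /FAb pickleK -Hs sat_Alls.
  move=> /(_ vs Hv); rewrite sat_Imp sat_Phi; last by rewrite !size_cat Hs Hv.
  by apply.
move=> H; apply/sat_And_iff => n; rewrite /FAb; case: unpickle => [a|]; last exact: sat_True.
rewrite -Hs sat_Alls => vs Hv; rewrite sat_Imp sat_Phi; last by rewrite !size_cat Hs Hv.
exact: H.
Qed.

Lemma sat_FE M xs ys P : size ys = size xs ->
  (satM M (env ys) (FE xs P) <-> Exs (fun xs' ys' => satM M (env ys') (P xs')) xs ys).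
Proof.
move=> Hs; split.
  move/sat_Or_iff=> [n]; rewrite /FEb; case: unpickle => [a|]; last by move/sat_False.
  rewrite -Hs sat_Exs => -[vs [Hv]]; rewrite sat_And2 sat_Phi; last by rewrite !size_cat Hs Hv.
  by move=> [Ca Pa]; exists a, vs.
move=> [a [vs [Hv [Ca Pa]]]]; apply/sat_Or_iff; exists (pickle a); rewrite /FEb pickleK -Hs sat_Exs.
by exists vs; split=> //; rewrite sat_And2 sat_Phi // !size_cat Hs Hv.
Qed.


Definition pull (g : nat -> nat) (M : X ar) : X ar := fun R t => M R (map_tuple g t).

Definition dense (D : nat -> seq nat -> seq nat -> Prop) :=
  forall n xs ys, C xs ys -> exists xs2 ys2, C (xs ++ xs2) (ys ++ ys2) /\ D n (xs ++ xs2) (ys ++ ys2).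
Definition dense1 (Q : seq nat -> seq nat -> Prop) :=
  forall xs ys, C xs ys -> exists xs2 ys2, C (xs ++ xs2) (ys ++ ys2) /\ Q (xs ++ xs2) (ys ++ ys2).
Definition meets g (D : nat -> seq nat -> seq nat -> Prop) :=
  forall n, exists xs ys, D n xs ys /\ map g xs = ys.
Definition meets1 g (Q : seq nat -> seq nat -> Prop) := exists xs ys, Q xs ys /\ map g xs = ys.
Definition Truth M (B : X ar -> Prop) (P : seq nat -> seq nat -> Prop) D :=
  forall g, in_Aut F g -> meets g D -> (B (pull g M) <-> exists xs, P xs (map g xs)).

Definition Good (B : X ar -> Prop) :=
  exists Psi : seq nat -> form, (forall xs, bnd (size xs) (Psi xs)) /\
  forall M, exists P : seq nat -> seq nat -> Prop,
    (forall xs ys, C xs ys -> (satM M (env ys) (Psi xs) <-> P xs ys)) /\ Mono P /\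
    exists D, dense D /\ Truth M B P D.

Definition combine (Ds : nat -> nat -> seq nat -> seq nat -> Prop) (Q : seq nat -> seq nat -> Prop) :
  nat -> seq nat -> seq nat -> Prop :=
  fun n => match @unpickle (option (nat * nat)) n with
     | Some (Some (i, j)) => Ds i j
     | Some None => Q
     | None => fun _ _ => True end.

Lemma dense_combine Ds Q : (forall i, dense (Ds i)) -> dense1 Q -> dense (combine Ds Q).
Proof.
move=> HD HQ n xs ys Hc; rewrite /combine; case: unpickle => [[[i j]|]|].
- exact: HD.
- exact: HQ.
- by exists [::], [::]; rewrite !cats0.
Qed.

Lemma meets_combine g Ds Q : meets g (combine Ds Q) -> (forall i, meets g (Ds i)) /\ meets1 g Q.
Proof.
move=> H; split.
  move=> i j; have := H (pickle (Some (i, j))); by rewrite /combine pickleK.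
by have := H (pickle (@None (nat * nat))); rewrite /combine pickleK.
Qed.

Lemma Ext_iff R1 R2 xs ys : (forall xs ys, C xs ys -> (R1 xs ys <-> R2 xs ys)) ->
  (Ext R1 xs ys <-> Ext R2 xs ys).
Proof. by move=> H; split=> K a vs Hv Ca; apply/(H _ _ Ca); apply: K. Qed.
Lemma Exs_iff R1 R2 xs ys : (forall xs ys, C xs ys -> (R1 xs ys <-> R2 xs ys)) ->
  (Exs R1 xs ys <-> Exs R2 xs ys).
Proof.
by move=> H; split=> -[a [vs [Hv [Ca K]]]]; exists a, vs; split=> //; split=> //; apply/(H _ _ Ca).
Qed.

Lemma C_id : in_Aut F id.
Proof.
split; first by exists id.
have Hid : forall i (a : (b i).-tuple nat), map_tuple id a = a by move=> i a; apply: tup_eq; rewrite /= map_id.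
move=> i t; split; first by move=> [a [Ha ->]]; rewrite Hid.
by move=> Ht; exists t; rewrite Hid.
Qed.

Lemma Caut g xs : in_Aut F g -> C xs (map g xs).
Proof. exact: C_aut. Qed.

Lemma dense_pattern R : Mono R ->
  dense1 (fun xs ys => R xs ys \/ Ext (fun a b => ~ Ext (Exs R) a b) xs ys).
Proof.
move=> HR xs ys Hc.
case: (classic (exists a vs, size vs = size a /\ C (xs ++ a) (ys ++ vs) /\ Ext (Exs R) (xs ++ a) (ys ++ vs))).
  move=> [a [vs [Hv [Ca Pa]]]].
  have := Pa [::] [::] erefl; rewrite !cats0 => /(_ Ca) [a2 [vs2 [Hv2 [Ca2 R2]]]].
  exists (a ++ a2), (vs ++ vs2); rewrite !catA; split=> //; by left.
move=> Hn; exists [::], [::]; rewrite !cats0; split=> //; right.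
move=> a vs Hv Ca Pa; apply: Hn; by exists a, vs.
Qed.

Lemma Ext_intro R xs ys : Mono R -> C xs ys -> R xs ys -> Ext (Exs R) xs ys.
Proof.
move=> HR Hc Hr a vs Hv Ca; exists [::], [::]; rewrite !cats0; split=> //; split=> //.
apply: HR Hr => //; apply: incl_prefix; exact: C_size Hc.
Qed.

Lemma contra_pattern (P : seq nat -> seq nat -> Prop) g xs xs' : in_Aut F g -> Mono P ->
  P xs (map g xs) -> Ext (fun a b => ~ P a b) xs' (map g xs') -> False.
Proof.
move=> Hg HP H1 H2.
have Cj : C (xs' ++ xs) (map g xs' ++ map g xs) by rewrite -map_cat; apply: Caut.
apply: (H2 xs (map g xs)) => //; first by rewrite size_map.
apply: HP H1 => //; first exact: Caut.
apply: incl_suffix; by rewrite size_map.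
Qed.

Lemma Good_compl B : Good B -> Good (fun M => ~ B M).
Proof.
move=> [Psi [Hb HM]].
exists (fun xs => FA xs (fun xs' => fNot (Psi xs'))); split.
  by move=> xs; apply: bnd_FA => a; apply: bnd_Not.
move=> M; have [P [HP [Hm [D [Hd Ht]]]]] := HM M.
exists (Ext (fun xs ys => ~ P xs ys)); split.
  move=> xs ys Hc; rewrite sat_FA; last by rewrite (C_size Hc).
  apply: Ext_iff => xs' ys' Hc'; rewrite sat_Not_iff; split=> H K; apply: H; exact/(HP _ _ Hc').
split; first by apply: Mono_Ext; apply: Down_not.
exists (combine (fun _ => D) (fun xs ys => P xs ys \/ Ext (fun xs ys => ~ P xs ys) xs ys)); split.
  apply: dense_combine => // xs ys Hc.
  case: (classic (exists a vs, size vs = size a /\ C (xs ++ a) (ys ++ vs) /\ P (xs ++ a) (ys ++ vs))).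
    by move=> [a [vs [Hv [Ca Pa]]]]; exists a, vs; split=> //; left.
  move=> Hn; exists [::], [::]; rewrite !cats0; split=> //; right.
  by move=> a vs Hv Ca Pa; apply: Hn; exists a, vs.
move=> g Hg /meets_combine [/(_ 0) HmD [xs [ys [HQ Hxy]]]].
have Htg := Ht g Hg HmD.
split.
  move=> HnB; subst ys; case: HQ => [HPx|HPx]; last by exists xs.
  by case: HnB; apply/Htg; exists xs.
move=> [xs' Hx'] /Htg [xs2 H2].
exact: (contra_pattern Hg Hm H2 Hx').
Qed.

Lemma choice_nat (T : Type) (Q : nat -> T -> Prop) : (forall n, exists t, Q n t) -> exists f, forall n, Q n (f n).
Proof.
move=> H; exists (fun n => proj1_sig (constructive_indefinite_description _ (H n))).
move=> n; exact: (proj2_sig (constructive_indefinite_description _ (H n))).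
Qed.

Lemma Mono_any (Ps : nat -> seq nat -> seq nat -> Prop) : (forall n, Mono (Ps n)) ->
  Mono (fun xs ys => exists n, Ps n xs ys).
Proof. by move=> H xs ys xs' ys' Hc Hc' Hi [n Hn]; exists n; apply: (H n) Hn. Qed.

Lemma Good_union (Bs : nat -> X ar -> Prop) : (forall n, Good (Bs n)) -> Good (fun M => exists n, Bs n M).
Proof.
move=> HG; have [Psis HPsis] := choice_nat HG.
exists (fun xs => FA xs (fun xs' => FE xs' (fun xs'' => fOr (fun n => Psis n xs'')))); split.
  move=> xs; apply: bnd_FA => a; apply: bnd_FE => a2; apply: bnd_Or => n.
  exact: (HPsis n).1.
move=> M.
have [Ps HPs] := choice_nat (fun n => (HPsis n).2 M).
have [Ds HDs] := choice_nat (fun n => (HPs n).2.2).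
have HmP : forall n, Mono (Ps n) := fun n => (HPs n).2.1.
pose R xs ys := exists n, Ps n xs ys.
have HR : Mono R by apply: Mono_any.
pose P := Ext (Exs R).
exists P; split.
  move=> xs ys Hc; rewrite sat_FA; last by rewrite (C_size Hc).
  apply: Ext_iff => xs' ys' Hc'; rewrite sat_FE; last by rewrite (C_size Hc').
  apply: Exs_iff => xs'' ys'' Hc''; rewrite sat_Or_iff; split=> -[n Hn]; exists n.
    exact/((HPs n).1 _ _ Hc'').
  exact/((HPs n).1 _ _ Hc'').
split; first by apply: Mono_Ext; apply: Down_Exs.
exists (combine Ds (fun xs ys => R xs ys \/ Ext (fun a b => ~ P a b) xs ys)); split.
  apply: dense_combine; first by move=> i; exact: (HDs i).1.
  exact: dense_pattern.
move=> g Hg /meets_combine [HmD [xs [ys [HQ Hxy]]]].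
split.
  move=> [n /((HDs n).2 g Hg (HmD n))] [xs1 H1]; exists xs1.
  apply: Ext_intro => //; first exact: Caut.
  by exists n.
move=> [xs1 H1]; subst ys; case: HQ => [[n Hn]|HQ]; last first.
  by case: (contra_pattern Hg (Mono_Ext (Down_Exs HR)) H1 HQ).
exists n; apply/((HDs n).2 g Hg (HmD n)); by exists xs.
Qed.


Definition Dg := seq (coord ar * bool).
Variable decD : nat -> option Dg.
Hypothesis HdecD : forall d, exists n, decD n = Some d.
Variable U : X ar -> Prop.
Hypothesis HU : is_open U.

Definition DQ xs (d : Dg) :=
  (forall p, List.In p d -> all (fun j => j < size xs) (projT2 p.1)) /\
  forall M' : X ar, (forall p, List.In p d -> (M' (projT1 p.1) (map_tuple (nth 0 xs) (projT2 p.1)) <-> p.2 = true)) -> U M'.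
Definition Basic (M : X ar) xs ys := exists d, DQ xs d /\
  forall p, List.In p d -> (M (projT1 p.1) (map_tuple (nth 0 ys) (projT2 p.1)) <-> p.2 = true).

Definition litF (p : coord ar * bool) : form :=
  if p.2 then @fRel I ar b (projT1 p.1) (projT2 p.1) else fNot (@fRel I ar b (projT1 p.1) (projT2 p.1)).
Fixpoint conjF (d : Dg) : form :=
  match d with [::] => fTrue | p :: d' => fAnd2 (litF p) (conjF d') end.

Lemma sat_conjF M s (d : Dg) : satM M s (conjF d) <->
  forall p, List.In p d -> (M (projT1 p.1) (map_tuple s (projT2 p.1)) <-> p.2 = true).
Proof.
elim: d => [|p d IH]; rewrite [conjF _]/=; first by split=> // _; apply: sat_True.
rewrite sat_And2 IH; split.
  move=> [H1 H2] q [<-|Hq]; last exact: H2.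
  move: H1; rewrite /litF; case: p.2 => /= H; first by split.
  by split=> // K; case: (H K).
move=> H; split; last by move=> q Hq; apply: H; right.
have := H p (or_introl erefl); rewrite /litF; case: p.2 => /= K; first exact/K.
by move=> /K.
Qed.

Lemma bnd_conjF k (d : Dg) : (forall p, List.In p d -> all (fun j => j < k) (projT2 p.1)) -> bnd k (conjF d).
Proof.
elim: d => [|p d IH] H; rewrite [conjF _]/=; first exact: bnd_True.
apply: bnd_And2; last by apply: IH => q Hq; apply: H; right.
rewrite /litF; case: p.2; [|apply: bnd_Not]; apply: bnd_Rel; apply: H; by left.
Qed.

Definition BasicFb xs n : form :=
  match decD n with Some d => if pb (DQ xs d) then conjF d else fFalse | None => fFalse end.
Definition BasicF xs := fOr (BasicFb xs).

Lemma bnd_BasicF xs : bnd (size xs) (BasicF xs).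
Proof.
apply: bnd_Or => n; rewrite /BasicFb; case: decD => [d|]; last exact: bnd_False.
case: (pb _) (pbP (DQ xs d)) => -[H1 H2]; last exact: bnd_False.
have [Hp _] := H1 erefl; exact: bnd_conjF.
Qed.

Lemma sat_BasicF M xs ys : satM M (env ys) (BasicF xs) <-> Basic M xs ys.
Proof.
rewrite sat_Or_iff; split.
  move=> [n]; rewrite /BasicFb; case: decD => [d|]; last by move/sat_False.
  case: (pb _) (pbP (DQ xs d)) => -[H1 H2]; last by move/sat_False.
  by rewrite sat_conjF => H; exists d; split=> //; apply: H1.
move=> [d [Hd Hc]]; have [n Hn] := HdecD d; exists n; rewrite /BasicFb Hn.
case: (pb _) (pbP (DQ xs d)) => -[H1 H2]; last by have := H2 Hd.
by rewrite sat_conjF.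
Qed.

Lemma mt_comp n (zs pi : seq nat) (u : n.-tuple nat) : all (fun j => j < size pi) u ->
  map_tuple (nth 0 zs) (map_tuple (nth 0 pi) u) = map_tuple (nth 0 (map (nth 0 zs) pi)) u.
Proof.
move=> H; apply: tup_eq => /=; rewrite -map_comp; apply/eq_in_map => j Hj /=.
by rewrite (nth_map 0) //; apply: (allP H).
Qed.

Lemma Mono_Basic M : Mono (Basic M).
Proof.
move=> xs ys xs' ys' Hc Hc' Hi [d [[Hpos Hsuf] Hcons]].
have [pi [Hpi [E1 E2]]] := incl_pi (C_size Hc) Hi.
have Hsp : size pi = size xs by rewrite -E1 size_map.
pose f (p : coord ar * bool) : coord ar * bool :=
  (existT _ (projT1 p.1) (map_tuple (nth 0 pi) (projT2 p.1)), p.2).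
have Hpos' : forall p, List.In p d -> all (fun j => j < size pi) (projT2 p.1).
  by move=> p /Hpos; rewrite Hsp.
exists (map f d); split; first split.
- move=> q /List.in_map_iff [p [<- Hp]] /=; apply/allP => x /mapP [j Hj ->].
  apply: (allP Hpi); apply: mem_nth; exact: (allP (Hpos' p Hp)).
- move=> M' HM'; apply: Hsuf => p Hp; have := HM' (f p) (List.in_map f _ _ Hp).
  by rewrite /= mt_comp ?E1 //; apply: Hpos'.
- move=> q /List.in_map_iff [p [<- Hp]] /=; rewrite mt_comp ?E2; last exact: Hpos'.
  exact: Hcons.
Qed.

Lemma in_flatten (l : seq (coord ar)) p x : List.In p l -> x \in val (projT2 p) ->
  x \in flatten (map (fun q : coord ar => val (projT2 q)) l).
Proof.
elim: l => [|q l IH] //= [->|Hp] Hx; rewrite mem_cat; first by rewrite Hx.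
by rewrite IH ?orbT.
Qed.

Lemma Good_open : Good U.
Proof.
exists (fun xs => FA xs (fun xs' => FE xs' BasicF)); split.
  by move=> xs; apply: bnd_FA => a; apply: bnd_FE => a2; apply: bnd_BasicF.
move=> M; pose P := Ext (Exs (Basic M)).
have HR : Mono (Basic M) := @Mono_Basic M.
exists P; split.
  move=> xs ys Hc; rewrite sat_FA; last by rewrite (C_size Hc).
  apply: Ext_iff => xs' ys' Hc'; rewrite sat_FE; last by rewrite (C_size Hc').
  apply: Exs_iff => xs'' ys'' Hc''; exact: sat_BasicF.
split; first by apply: Mono_Ext; apply: Down_Exs.
exists (combine (fun _ _ _ _ => True) (fun xs ys => Basic M xs ys \/ Ext (fun a b => ~ P a b) xs ys)); split.
  apply: dense_combine; last exact: dense_pattern.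
  by move=> i n xs ys Hc; exists [::], [::]; rewrite !cats0.
move=> g Hg /meets_combine [_ [xs [ys [HQ Hxy]]]].
split.
  move=> HUg; have [l Hl] := HU HUg.
  pose xs1 := flatten (map (fun q : coord ar => val (projT2 q)) l).
  pose d := map (fun p : coord ar => (existT (fun R => (ar R).-tuple nat) (projT1 p)
         (map_tuple (fun x => index x xs1) (projT2 p)), pb (pull g M (projT2 p)))) l.
  have K1 : forall p, List.In p l -> map_tuple (nth 0 xs1) (map_tuple (fun x => index x xs1) (projT2 p)) = projT2 p.
    move=> p Hp; apply: tup_eq => /=; rewrite -map_comp -[RHS]map_id; apply/eq_in_map => x Hx /=.
    by rewrite nth_index // (in_flatten Hp Hx).
  have K2 : forall p, List.In p l -> map_tuple (nth 0 (map g xs1)) (map_tuple (fun x => index x xs1) (projT2 p))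
                                 = map_tuple g (projT2 p).
    move=> p Hp; apply: tup_eq => /=; rewrite -map_comp; apply/eq_in_map => x Hx /=.
    by rewrite (nth_map 0) ?index_mem ?(in_flatten Hp Hx) // nth_index // (in_flatten Hp Hx).
  exists xs1; apply: Ext_intro => //; first exact: Caut.
  exists d; split; first split.
  - move=> q /List.in_map_iff [p [<- Hp]] /=; apply/allP => j /mapP [x Hx ->].
    by rewrite index_mem (in_flatten Hp Hx).
  - move=> M' HM'; apply: Hl => p Hp; have := HM' _ (List.in_map _ _ _ Hp); rewrite /= K1 //.
    by rewrite pbP.
  - move=> q /List.in_map_iff [p [<- Hp]] /=; rewrite K2 // pbP; by [].
move=> [xs0 H0]; subst ys; case: HQ => [[d [[Hpos Hsuf] Hcons]]|HQ]; last first.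
  by case: (contra_pattern Hg (Mono_Ext (Down_Exs HR)) H0 HQ).
apply: Hsuf => p Hp; rewrite /pull.
have -> : map_tuple g (map_tuple (nth 0 xs) (projT2 p.1)) = map_tuple (nth 0 (map g xs)) (projT2 p.1).
  apply: tup_eq => /=; rewrite -map_comp; apply/eq_in_map => j Hj /=.
  by rewrite (nth_map 0) //; apply: (allP (Hpos p Hp)).
exact: Hcons.
Qed.


End Forcing.

Lemma decD_ex (HI : countable_type I) : exists decD : nat -> option Dg, forall d, exists n, decD n = Some d.
Proof.
case: HI => enc Henc.
pose encC (p : coord ar * bool) : nat * seq nat * bool := (enc (projT1 p.1), val (projT2 p.1), p.2).
have HencC : injective encC.
  move=> [[R u] v] [[R' u'] v'] [E1 E2 E3] /=.
  have ER := Henc _ _ E1; subst R'.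
  have Eu : u = u' by apply: val_inj.
  by subst.
pose encD (d : Dg) := pickle (map encC d).
have HencD : injective encD by move=> d1 d2 /(pcan_inj pickleK) /(inj_map HencC).
exists (fun n => match excluded_middle_informative (exists d, encD d = n) with
   | left H => Some (proj1_sig (constructive_indefinite_description _ H)) | right _ => None end).
move=> d; exists (encD d); case: excluded_middle_informative => [H|H]; last by case: H; exists d.
congr Some; apply: HencD; exact: (proj2_sig (constructive_indefinite_description _ H)).
Qed.

Lemma pull_inv (A : X ar -> Prop) g M : Aut_invariant F A -> in_Aut F g -> (A (pull g M) <-> A M).
Proof.
move=> HA Hg; have [[h gh hg] HF] := Hg.
have Ehg : forall n (a : n.-tuple nat), map_tuple g (map_tuple h a) = a.
  by move=> n a; apply: tup_eq; rewrite /= -map_comp (eq_map hg) map_id.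
have Egh : forall n (a : n.-tuple nat), map_tuple h (map_tuple g a) = a.
  by move=> n a; apply: tup_eq; rewrite /= -map_comp (eq_map gh) map_id.
have Hact : forall N, act h N = pull g N.
  move=> N; apply: functional_extensionality_dep => R; apply: functional_extensionality => t.
  apply: propositional_extensionality; split.
    by move=> [a [Ha ->]]; rewrite /pull Ehg.
  by move=> H; exists (map_tuple g t); rewrite Egh.
have Hh : in_Aut F h.
  split; first by exists g.
  move=> i t; split.
    by move=> [a [Ha ->]]; apply/(Aut_F Hg _); rewrite Ehg.
  by move=> Ht; exists (map_tuple g t); split; [apply/(Aut_F Hg _) | rewrite Egh].
rewrite -Hact; split.
  move=> H; have := (HA h Hh (act h M)).2 H; move=> [N [HN EN]].
  have -> : M = N; last by [].
  apply: functional_extensionality_dep => R; apply: functional_extensionality => t.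
  have := congr1 (fun Z : X ar => Z R (map_tuple h t)) EN; rewrite !Hact /pull Ehg => ->.
  by [].
by move=> HM; apply/(HA h Hh); exists M.
Qed.

Lemma Borel_Good lam (decD : nat -> option Dg) (HdecD : forall d, exists n, decD n = Some d)
  (A : X ar -> Prop) : Borel A -> Good lam A.
Proof.
elim=> [U HU|B _ IH|Bs _ IH].
- exact (Good_open lam HdecD HU).
- exact: Good_compl.
- exact: Good_union.
Qed.

End Main.

Unset Implicit Arguments.
Set Strict Implicit.

Theorem proposition6
  (I : Type) (ar : I -> nat) (HI : countable_type I)
  (b : nat -> nat) (F : forall i : nat, (b i).-tuple nat -> Prop)
  (A : X ar -> Prop) :
  Borel A -> Aut_invariant F A -> definable F A.
Proof.
move=> HB HA.
have [decD HdecD] := decD_ex ar HI.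
have [lam Hlam] := E_lam F.
have [Psi [Hbnd HM]] := Borel_Good F lam HdecD HB.
exists (FE F lam [::] Psi); split.
  move=> x Hx; have := bnd_FE (P := Psi) (xs := [::]) (fun a => Hbnd a) Hx; by [].
move=> M; have [P [HP [Hm [D [Hd Ht]]]]] := HM M.
rewrite /models (_ : (fun _ => 0) = env [::]); last by apply: functional_extensionality => -[|j].
rewrite sat_FE //; split.
  move=> HAM.
  have C0 : C F lam [::] (map id [::]) by apply: Caut; apply: C_id.
  have [g [Hg [_ Hmeet]]] := generic Hlam Hd C0.
  have [xs Hxs] := (Ht g Hg Hmeet).1 ((pull_inv M HA Hg).2 HAM).
  exists xs, (map g xs); split; first by rewrite size_map.
  have Cx : C F lam xs (map g xs) by apply: Caut.
  by split=> //; apply/(HP _ _ Cx).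
move=> [xs [ys [Hs [Cx Hsat]]]].
have [g [Hg [Hxy Hmeet]]] := generic Hlam Hd Cx.
apply/(pull_inv M HA Hg); apply/(Ht g Hg Hmeet); exists xs; rewrite Hxy.
exact/(HP _ _ Cx).
Qed.
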